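(* Let $(\dot I_0,\dot d_0,\dot z_1,\dot z_2,\dot z_3)\in\mathbb C^5$ and $a,b,F\in\mathbb C$ with $F\ne0$. Then every nonzero $\mathcal L$-submodule $M$ of $V(\dot I_0,\dot d_0,\dot z_1,\dot z_2,\dot z_3)\otimes A(a,b;F)$ contains $\bar w\otimes x^k$ for some $k\in\mathbb Z$, where $\bar w$ is a highest weight vector of $V(\dot I_0,\dot d_0,\dot z_1,\dot z_2,\dot z_3)$.
   Context: $\mathcal{L}$ has basis $\{d_n,I_n,z_1,z_2,z_3\mid n\in\mathbb{Z}\}$ with brackets $[d_n,d_m]=(m-n)d_{m+n}+\delta_{n,-m}\frac{n^3-n}{12}z_1$, $[d_n,I_m]=mI_{m+n}+\delta_{n,-m}(n^2+n)z_2$, $[I_n,I_m]=n\delta_{n,-m}z_3$, $z_i$ central. $V(\dot I_0,\dot d_0,\dot z_1,\dot z_2,\dot z_3)$ is the simple quotient of the Verma module $U(\mathcal L)/\mathcal I$, where $\mathcal I$ is the left ideal generated by $d_n,I_n$ ($n\in\mathbb N$), $d_0-\dot d_0$, $I_0-\dot I_0$, $z_i-\dot z_i$; $\bar w$ is the image of $1+\mathcal I$. $A(a,b;F)=\mathbb{C}[x,x^{-1}]$ with $z_1=z_2=z_3=0$, $d_nx^m=(a+m+nb)x^{m+n}$, $I_nx^m=Fx^{m+n}$. *)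

(* Defs.v *)
From HB Require Import structures.
From mathcomp Require Import all_boot all_order all_algebra.
From mathcomp Require Import complex.
From mathcomp Require Import reals.
Set Implicit Arguments. Unset Strict Implicit. Unset Printing Implicit Defensive.
Import Order.TTheory GRing.Theory Num.Theory.
Local Open Scope ring_scope.

Section TwistedHV.
Variables (K : fieldType) (V : lmodType K).

(* A representation of the twisted Heisenberg-Virasoro algebra L on V:
   dd n, II n, z1, z2, z3 are the actions of d_n, I_n, z_1, z_2, z_3. *)
Definition lin (f : V -> V) : Prop :=
  forall (c : K) (u v : V), f (c *: u + v) = c *: f u + f v.

Definition is_Lmod (dd II : int -> V -> V) (z1 z2 z3 : V -> V) : Prop :=
  [/\ (forall n, lin (dd n)), (forall n, lin (II n)), lin z1, lin z2 & lin z3] /\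
  [/\
      (forall (n m : int) v, dd n (dd m v) - dd m (dd n v) =
         (m - n)%:~R *: dd (m + n) v +
         (if n == - m then ((n ^+ 3 - n)%:~R / 12%:R) *: z1 v else 0)),
      (forall (n m : int) v, dd n (II m v) - II m (dd n v) =
         m%:~R *: II (m + n) v +
         (if n == - m then (n ^+ 2 + n)%:~R *: z2 v else 0)),
      (forall (n m : int) v, II n (II m v) - II m (II n v) =
         (if n == - m then n%:~R *: z3 v else 0)) &
      (forall z, z = z1 \/ z = z2 \/ z = z3 ->
         [/\ forall n v, z (dd n v) = dd n (z v),
             forall n v, z (II n v) = II n (z v),
             forall v, z (z1 v) = z1 (z v),
             forall v, z (z2 v) = z2 (z v) &
             forall v, z (z3 v) = z3 (z v)])].

Definition is_Lsubmod (dd II : int -> V -> V) (z1 z2 z3 : V -> V)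
    (S : V -> Prop) : Prop :=
  [/\ S 0, (forall u v, S u -> S v -> S (u + v)),
      (forall (c : K) u, S u -> S (c *: u)),
      (forall n u, S u -> S (dd n u) /\ S (II n u)) &
      (forall u, S u -> [/\ S (z1 u), S (z2 u) & S (z3 u)])].

Definition Lsimple (dd II : int -> V -> V) (z1 z2 z3 : V -> V) : Prop :=
  (exists v : V, v <> 0) /\
  forall S, is_Lsubmod dd II z1 z2 z3 S ->
    (forall v, S v -> v = 0) \/ (forall v, S v).

Definition is_hw_vector (dd II : int -> V -> V) (z1 z2 z3 : V -> V) (w : V)
    (I0 d0 zd1 zd2 zd3 : K) : Prop :=
  [/\ w <> 0,
      (forall n : int, 0 < n -> dd n w = 0 /\ II n w = 0),
      dd 0 w = d0 *: w /\ II 0 w = I0 *: w &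
      [/\ z1 w = zd1 *: w, z2 w = zd2 *: w & z3 w = zd3 *: w]].

(* The tensor product V (x) A(a,b;F), A = K[x,x^-1], is modelled as the
   finitely supported functions f : int -> V, f <-> sum_k f k (x) x^k. *)
Definition finsupp (f : int -> V) : Prop :=
  exists s : seq int, forall k, k \notin s -> f k = 0.

(* action of d_n : d_n (v (x) x^m) = d_n v (x) x^m + (a+m+nb) v (x) x^{m+n} *)
Definition tD (dd : int -> V -> V) (a b : K) (n : int) (f : int -> V) : int -> V :=
  fun k => dd n (f k) + (a + (k - n)%:~R + n%:~R * b) *: f (k - n).

(* action of I_n : I_n (v (x) x^m) = I_n v (x) x^m + F v (x) x^{m+n} *)
Definition tI (II : int -> V -> V) (F : K) (n : int) (f : int -> V) : int -> V :=
  fun k => II n (f k) + F *: f (k - n).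

(* action of a central z (acting by 0 on A) *)
Definition tZ (z : V -> V) (f : int -> V) : int -> V := fun k => z (f k).

Definition is_tensor_submod (dd II : int -> V -> V) (z1 z2 z3 : V -> V)
    (a b F : K) (M : (int -> V) -> Prop) : Prop :=
  [/\ (forall f, M f -> finsupp f),
      M (fun _ => 0),
      (forall f g, M f -> M g -> M (fun k => f k + g k)),
      (forall (c : K) f, M f -> M (fun k => c *: f k)) &
      (forall f, M f ->
         [/\ forall n, M (tD dd a b n f), forall n, M (tI II F n f),
             M (tZ z1 f), M (tZ z2 f) & M (tZ z3 f)])].

Definition pure (v : V) (k : int) : int -> V := fun j => if j == k then v else 0.

End TwistedHV.

(* Main.v *)
Require Import Defs.
From HB Require Import structures.
From mathcomp Require Import all_boot all_order all_algebra.
From mathcomp Require Import complex.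
From mathcomp Require Import reals.
From mathcomp Require Import zify ring.
From Stdlib Require Import FunctionalExtensionality Classical.
Import Order.TTheory GRing.Theory Num.Theory.
Local Open Scope ring_scope.

Lemma lin0 (K : fieldType) (V : lmodType K) (f : V -> V) : lin f -> f 0 = 0.
Proof.
move=> H; have := H 1 0 0; rewrite !scale1r addr0 => /esym/eqP.
rewrite -subr_eq0 addrK; move/eqP. done.
Qed.

Lemma linD (K : fieldType) (V : lmodType K) (f : V -> V) u v :
  lin f -> f (u + v) = f u + f v.
Proof. by move=> H; have := H 1 u v; rewrite !scale1r. Qed.

Lemma linZ (K : fieldType) (V : lmodType K) (f : V -> V) c u :
  lin f -> f (c *: u) = c *: f u.
Proof. by move=> H; have := H c u 0; rewrite addr0 (@lin0 _ _ f H) addr0. Qed.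

Lemma eq_subr (K : fieldType) (V : lmodType K) (x y z : V) : x - y = z -> x = z + y.
Proof. by move=> H; apply/eqP; rewrite -subr_eq H. Qed.

Arguments lin0 {K V f}. Arguments linD {K V f}. Arguments linZ {K V f}. Arguments eq_subr {K V x y z}.

Theorem lemma19 (R : realType) (I0 d0 zd1 zd2 zd3 a b F : R[i])
  (V : lmodType R[i]) (dd II : int -> V -> V) (z1 z2 z3 : V -> V) (w : V) :
  is_Lmod dd II z1 z2 z3 ->
  Lsimple dd II z1 z2 z3 ->
  is_hw_vector dd II z1 z2 z3 w I0 d0 zd1 zd2 zd3 ->
  F != 0 ->
  forall M : (int -> V) -> Prop,
    is_tensor_submod dd II z1 z2 z3 a b F M ->
    (exists f, M f /\ f <> (fun _ => 0)) ->
    exists k : int, M (pure w k).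
Proof.
move=> [[lind linI lz1 lz2 lz3] [Hdd HdI HII Hz]] [_ Hsimp] [wne Hwpos _ _] HF M
  [Mfs M0 MD MZ Mact] [f [Mf fne]].
have dd0 n : dd n 0 = 0 := lin0 (lind n).
have II0 n : II n 0 = 0 := lin0 (linI n).
have z10 : z1 0 = 0 := lin0 lz1.
have z20 : z2 0 = 0 := lin0 lz2.
have z30 : z3 0 = 0 := lin0 lz3.
have Nil : forall v, exists N : int, forall n, N <= n -> dd n v = 0 /\ II n v = 0.
  pose S := fun v => exists N : int, forall n, N <= n -> dd n v = 0 /\ II n v = 0.
  have HS : is_Lsubmod dd II z1 z2 z3 S.
    split.
    - by exists 0 => n _; rewrite dd0 II0.
    - move=> u v [Nu Hu] [Nv Hv]; exists (`|Nu| + `|Nv|) => n Hn.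
      have [H1 H2] := Hu n ltac:(lia); have [H3 H4] := Hv n ltac:(lia).
      by rewrite !linD // H1 H2 H3 H4 addr0.
    - move=> c u [Nu Hu]; exists Nu => n Hn; have [H1 H2] := Hu n Hn.
      by rewrite !linZ // H1 H2 scaler0.
    - move=> m u [Nu Hu]; split.
      + exists (`|Nu| + `|m| + 1) => n Hn.
        have [H1 H2] := Hu n ltac:(lia); have [H3 H4] := Hu (m + n) ltac:(lia).
        have nm : (n == - m) = false by apply/negbTE; lia.
        have nm' : (m == - n) = false by apply/negbTE; lia.
        split.
        * rewrite (eq_subr (Hdd n m u)) nm H1 H3 dd0 scaler0; by rewrite !addr0.
        * have := eq_subr (HdI m n u).
          by rewrite nm' addr0 H2 dd0 (addrC n m) H4 scaler0 add0r => ->.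
      + exists (`|Nu| + `|m| + 1) => n Hn.
        have [H1 H2] := Hu n ltac:(lia); have [H3 H4] := Hu (m + n) ltac:(lia).
        have nm : (n == - m) = false by apply/negbTE; lia.
        split.
        * by rewrite (eq_subr (HdI n m u)) nm H1 H4 II0 scaler0 !addr0.
        * by rewrite (eq_subr (HII n m u)) nm H2 II0 add0r.
    - move=> u [Nu Hu].
      have zk : forall z, z = z1 \/ z = z2 \/ z = z3 -> lin z -> S (z u).
        move=> z hz lz; have [Hzd HzI _ _ _] := Hz z hz.
        exists Nu => n Hn; have [H1 H2] := Hu n Hn.
        by rewrite -Hzd -HzI H1 H2 (lin0 lz).
      split; apply: zk => //; tauto.
  move=> v; case: (Hsimp S HS) => [H|H]; last exact: H.
  exfalso; apply: wne; apply: H; exists 1 => n Hn; apply: Hwpos; lia.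

pose shift := fun (n : int) (g : int -> V) => fun k : int => g (k - n).
pose good := fun g => exists N : int, forall n : int, N <= n -> M (shift n g).
have Mext : forall g h, M g -> (forall k, g k = h k) -> M h.
  move=> g h Mg E; have -> : h = g by apply: functional_extensionality => k; rewrite E.
  exact: Mg.
have NilF : forall g, finsupp g -> exists N : int, forall n : int, N <= n ->
    forall k, dd n (g k) = 0 /\ II n (g k) = 0.
  move=> g [s Hs].
  suff [N HN] : exists N : int, forall n : int, N <= n ->
      forall k, k \in s -> dd n (g k) = 0 /\ II n (g k) = 0.
    exists N => n Hn k; case ks: (k \in s); first exact: HN.
    by rewrite Hs ?ks // dd0 II0.
  elim: s {Hs} => [|j t [N IH]]; first by exists 0.
  have [Nj Hj] := Nil (g j); exists (`|N| + `|Nj|) => n Hn k.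
  rewrite inE => /orP [/eqP -> | kt]; first by apply: Hj; lia.
  by apply: IH => //; lia.
have Ngood : forall g, good g -> exists N : int, forall n : int, N <= n ->
    forall k, dd n (g k) = 0 /\ II n (g k) = 0.
  move=> g [N HN]; have [N' HN'] := NilF _ (Mfs _ (HN N (lexx N))).
  exists N' => n Hn k; have := HN' n Hn (k + N); by rewrite /shift addrK.
have goodM : forall g, M g -> good g.
  move=> g Mg; have [N HN] := NilF _ (Mfs _ Mg); exists N => n Hn.
  have [_ HI _ _ _] := Mact _ Mg.
  apply: Mext (MZ F^-1 _ (HI n)) _ => k.
  by rewrite /tI (proj2 (HN n Hn k)) add0r scalerA mulVf // scale1r.
have goodD : forall g h, good g -> good h -> good (fun k => g k + h k).
  move=> g h [N1 H1] [N2 H2]; exists (`|N1| + `|N2|) => n Hn.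
  by apply: MD; [apply: H1 | apply: H2]; lia.
have goodZ : forall c g, good g -> good (fun k => c *: g k).
  move=> c g [N1 H1]; exists N1 => n Hn; exact: MZ (H1 n Hn).
have goodz1 : forall g, good g -> good (fun k => z1 (g k)).
  move=> g [N1 H1]; exists N1 => n Hn; by have [_ _ H _ _] := Mact _ (H1 n Hn).
have goodz2 : forall g, good g -> good (fun k => z2 (g k)).
  move=> g [N1 H1]; exists N1 => n Hn; by have [_ _ _ H _] := Mact _ (H1 n Hn).
have goodz3 : forall g, good g -> good (fun k => z3 (g k)).
  move=> g [N1 H1]; exists N1 => n Hn; by have [_ _ _ _ H] := Mact _ (H1 n Hn).
have goodI : forall j g, good g -> good (fun k => II j (g k)).
  move=> j g [N HN]; exists (`|N| + `|j|) => n Hn.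
  have [_ A _ _ _] := Mact _ (HN n ltac:(lia)).
  have B := HN (n + j) ltac:(lia).
  apply: Mext (MD _ _ (A j) (MZ (- F) _ B)) _ => k.
  rewrite /tI /shift.
  have -> : k - j - n = k - (n + j) by ring.
  by rewrite scaleNr addrK.
have goodP : forall g, good g -> good (fun k => (k%:~R : R[i]) *: g k).
  move=> g gg; have [N HN] := gg; have [N0 H0] := Ngood g gg.
  exists (`|N| + `|N0|) => n Hn.
  have [A _ _ _ _] := Mact _ (HN (n - `|N0|%:Z) ltac:(lia)).
  have B := HN n ltac:(lia).
  apply: Mext (MD _ _ (A `|N0|%:Z)
     (MZ (- (a + (n - `|N0|%:Z)%:~R + (`|N0|%:Z)%:~R * b)) _ B)) _ => k.
  rewrite /tD /shift (proj1 (H0 (`|N0|%:Z) ltac:(lia) _)) add0r.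
  have -> : k - `|N0|%:Z - (n - `|N0|%:Z) = k - n by ring.
  rewrite -scalerDl; congr (_ *: _).
  rewrite !intrD !intrN; ring.
have goodd : forall j g, good g -> good (fun k => dd j (g k)).
  move=> j g gg; have [N HN] := gg; have [N2 H2] := goodP g gg.
  exists (`|N| + `|N2| + `|j|) => n Hn.
  have [A _ _ _ _] := Mact _ (HN n ltac:(lia)).
  have B := HN (n + j) ltac:(lia).
  have C := H2 (n + j) ltac:(lia).
  apply: Mext (MD _ _ (MD _ _ (A j) (MZ (- (a + n%:~R + j%:~R * b)) _ B))
                  (MZ (-1) _ C)) _ => k.
  rewrite /tD /shift.
  have -> : k - j - n = k - (n + j) by ring.
  have E4 : forall x y z t : V, x + y + z + t = x + (y + z + t) by move=> *; rewrite !addrA.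
  rewrite E4 -[RHS]addr0; congr (_ + _).
  rewrite scalerA -!scalerDl.
  have -> : a + (k - j)%:~R + j%:~R * b + - (a + n%:~R + j%:~R * b) +
      -1 * (k - (n + j))%:~R = 0 :> R[i].
    rewrite !intrD !intrN; ring.
  by rewrite scale0r.
have [k0 fk0] : exists k0, f k0 <> 0.
  apply: NNPP => H; apply: fne; apply: functional_extensionality => k.
  apply: NNPP => Hk; apply: H; by exists k.
have [s Hs] := Mfs f Mf.
pose s' := [seq j <- s | j != k0].
pose h := fun k : int => (\prod_(j <- s') ((k - j)%:~R : R[i])) *: f k.
have gh : good h.
  suff G : forall t, good (fun k : int => (\prod_(j <- t) ((k - j)%:~R : R[i])) *: f k) by exact: G.
  elim=> [|j t IH].
    have -> : (fun k : int => (\prod_(j <- [::]) ((k - j)%:~R : R[i])) *: f k) = f.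
      by apply: functional_extensionality => k; rewrite big_nil scale1r.
    exact: goodM.
  have -> : (fun k : int => (\prod_(i <- j :: t) ((k - i)%:~R : R[i])) *: f k) =
    (fun k => (fun k => (k%:~R : R[i]) *: ((\prod_(i <- t) ((k - i)%:~R : R[i])) *: f k)) k
      + (fun k => (- (j%:~R : R[i])) *: ((\prod_(i <- t) ((k - i)%:~R : R[i])) *: f k)) k).
    apply: functional_extensionality => k.
    rewrite big_cons /= !scalerA -scalerDl; congr (_ *: _).
    rewrite intrD intrN; ring.
  apply: goodD; [exact: goodP | exact: goodZ].
have hz : forall k, k != k0 -> h k = 0.
  move=> k kk; rewrite /h; case ks: (k \in s).
    have ks' : k \in s' by rewrite mem_filter kk ks.
    by rewrite (big_rem k ks') /= subrr mul0r scale0r.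
  by rewrite Hs ?ks // scaler0.
have hk0 : h k0 <> 0.
  move/eqP; rewrite /h scaler_eq0 => /orP [|/eqP //].
  apply/negP; rewrite prodf_seq_neq0; apply/allP => j.
  rewrite mem_filter => /andP [jk _] /=.
  by rewrite intr_eq0 subr_eq0 eq_sym.
pose S := fun v => good (pure v k0).
have HS : is_Lsubmod dd II z1 z2 z3 S.
  rewrite /S; split.
  - have -> : pure (0 : V) k0 = fun _ => 0.
      by apply: functional_extensionality => k; rewrite /pure; case: ifP.
    by exists 0 => n _; exact: M0.
  - move=> u v Su Sv.
    have -> : pure (u + v) k0 = fun k => pure u k0 k + pure v k0 k.
      by apply: functional_extensionality => k; rewrite /pure; case: ifP; rewrite ?addr0.
    exact: goodD.
  - move=> c u Su.
    have -> : pure (c *: u) k0 = fun k => c *: pure u k0 k.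
      by apply: functional_extensionality => k; rewrite /pure; case: ifP; rewrite ?scaler0.
    exact: goodZ.
  - move=> n u Su; split.
    + have -> : pure (dd n u) k0 = fun k => dd n (pure u k0 k).
        by apply: functional_extensionality => k; rewrite /pure; case: ifP; rewrite ?dd0.
      exact: goodd.
    + have -> : pure (II n u) k0 = fun k => II n (pure u k0 k).
        by apply: functional_extensionality => k; rewrite /pure; case: ifP; rewrite ?II0.
      exact: goodI.
  - move=> u Su; split.
    + have -> : pure (z1 u) k0 = fun k => z1 (pure u k0 k).
        by apply: functional_extensionality => k; rewrite /pure; case: ifP; rewrite ?z10.
      exact: goodz1.
    + have -> : pure (z2 u) k0 = fun k => z2 (pure u k0 k).
        by apply: functional_extensionality => k; rewrite /pure; case: ifP; rewrite ?z20.
      exact: goodz2.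
    + have -> : pure (z3 u) k0 = fun k => z3 (pure u k0 k).
        by apply: functional_extensionality => k; rewrite /pure; case: ifP; rewrite ?z30.
      exact: goodz3.
have Sh : S (h k0).
  rewrite /S.
  have -> : pure (h k0) k0 = h.
    apply: functional_extensionality => k; rewrite /pure.
    by case: eqP => [-> //|/eqP kk]; rewrite hz.
  exact: gh.
case: (Hsimp S HS) => [H|H].
  by exfalso; apply: hk0; apply: H.
have [N HN] := H w; exists (k0 + N).
apply: Mext (HN N (lexx N)) _ => k.
by rewrite /shift /pure subr_eq.
Qed.
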